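(* Let $R$ be a Bézout domain. The following two conditions are equivalent: (1) $R$ is an elementary divisor ring; (2) For any nonzero elements $x,y,z\in R$, there exist elements $\lambda,a,b\in R$ such that $x+\lambda y$ divides $y(1-az)(1-b(1-z))$ in $R$.
   Context: A Bézout domain is an integral domain in which every finitely generated ideal is principal. Two matrices $A,B\in M_{m,n}(R)$ are equivalent if there exist invertible $P\in M_{m,m}(R)$, $Q\in M_{n,n}(R)$ with $B=PAQ$. A ring $R$ is an elementary divisor ring if every rectangular matrix over $R$ is equivalent to a diagonal matrix. *)

(* Defs.v *)
From mathcomp Require Import all_boot all_order all_algebra.
Set Implicit Arguments. Unset Strict Implicit. Unset Printing Implicit Defensive.
Import GRing.Theory.
Local Open Scope ring_scope.

Definition divides (R : comRingType) (a b : R) : Prop := exists c : R, b = c * a.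

Definition in_ideal_gen (R : comRingType) (k : nat) (f : 'I_k -> R) (x : R) : Prop :=
  exists c : 'I_k -> R, x = \sum_(i < k) c i * f i.

Definition bezout_domain (R : idomainType) : Prop :=
  forall (k : nat) (f : 'I_k -> R), exists d : R,
    forall x : R, in_ideal_gen f x <-> divides d x.

Definition is_diagonal (R : ringType) (m n : nat) (D : 'M[R]_(m, n)) : Prop :=
  forall (i : 'I_m) (j : 'I_n), (i : nat) <> (j : nat) -> D i j = 0.

Definition elementary_divisor_ring (R : comUnitRingType) : Prop :=
  forall (m n : nat) (A : 'M[R]_(m, n)),
    exists (P : 'M[R]_m) (Q : 'M[R]_n),
      P \in unitmx /\ Q \in unitmx /\ is_diagonal (P *m A *m Q).

(* Main.v *)
Require Import Defs.
From mathcomp Require Import all_boot all_order all_algebra.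
From mathcomp Require Import ring zify.
Import GRing.Theory.
Local Open Scope ring_scope.
Set Implicit Arguments. Unset Strict Implicit. Unset Printing Implicit Defensive.


Definition o1 : 'I_2 := @Ordinal 2 1 isT.
Lemma sum2 (V : nmodType) (F : 'I_2 -> V) : \sum_(i < 2) F i = F ord0 + F o1.
Proof. rewrite big_ord_recl big_ord1; congr (_ + F _); exact: val_inj. Qed.

Section Alg.
Variable R : idomainType.
Implicit Types x y z a b c : R.

Definition cop x y := exists u v : R, u * x + v * y = 1.

Lemma dvd_refl x : divides x x. Proof. by exists 1; rewrite mul1r. Qed.
Lemma dvd0 x : divides x 0. Proof. by exists 0; rewrite mul0r. Qed.
Lemma dvd_trans x y z : divides x y -> divides y z -> divides x z.
Proof. by move=> [k ->] [l ->]; exists (l * k); rewrite mulrA. Qed.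
Lemma dvd_mull x y k : divides x y -> divides x (k * y).
Proof. by move=> [l ->]; exists (k * l); rewrite mulrA. Qed.
Lemma dvd_mulr x y k : divides x y -> divides x (y * k).
Proof. by rewrite mulrC; apply: dvd_mull. Qed.
Lemma dvd_add x y z : divides x y -> divides x z -> divides x (y + z).
Proof. by move=> [k ->] [l ->]; exists (k + l); rewrite mulrDl. Qed.
Lemma dvd_opp x y : divides x y -> divides x (- y).
Proof. by move=> [k ->]; exists (- k); rewrite mulNr. Qed.
Lemma dvd_sub x y z : divides x y -> divides x z -> divides x (y - z).
Proof. by move=> *; apply: dvd_add => //; apply: dvd_opp. Qed.
Lemma dvd_sum I (r : seq I) (P : pred I) (F : I -> R) x :
  (forall i, P i -> divides x (F i)) -> divides x (\sum_(i <- r | P i) F i).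
Proof.
move=> H; apply: (big_ind (divides x)) => //; first exact: dvd0.
exact: dvd_add.
Qed.

Lemma cop_sym x y : cop x y -> cop y x.
Proof. by move=> [u [v H]]; exists v, u; rewrite addrC. Qed.
Lemma cop_dvdl x x' y : divides x' x -> cop x y -> cop x' y.
Proof. by move=> [k ->] [u [v H]]; exists (u * k), v; rewrite -H mulrA. Qed.
Lemma cop_dvdr x y y' : divides y' y -> cop x y -> cop x y'.
Proof. by move=> D /cop_sym C; apply/cop_sym; apply: cop_dvdl D C. Qed.
Lemma cop_mulr x y z : cop x y -> cop x z -> cop x (y * z).
Proof.
move=> [u1 [v1 H1]] [u2 [v2 H2]].
exists (u1 * u2 * x + u1 * v2 * z + v1 * y * u2), (v1 * v2).
by rewrite -[1]mul1r -{1}H1 -H2; ring.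
Qed.
Lemma cop_1 x : cop 1 x. Proof. by exists 1, 0; rewrite mulr1 mul0r addr0. Qed.
Lemma cop_unit x y k : k * y = 1 -> cop x y.
Proof. by move=> H; exists 0, k; rewrite mul0r add0r. Qed.
Lemma gauss x y z : cop x y -> divides x (y * z) -> divides x z.
Proof.
move=> [u [v H]] [k Hk]; exists (u * z + v * k).
have E : z = u * z * x + v * (y * z) by rewrite -[z in LHS]mulr1 -H; ring.
by rewrite {1}E Hk; ring.
Qed.

Lemma cancel_l g a b : g != 0 -> g * a = g * b -> a = b.
Proof. by move=> g0; apply: mulfI. Qed.

Hypothesis hB : bezout_domain R.

Lemma bez2 x y : exists g u v x' y',
  g = u * x + v * y /\ x = x' * g /\ y = y' * g.
Proof.
have [g Hg] := hB (fun i : 'I_2 => if i == ord0 then x else y).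
have [c Hc] : in_ideal_gen (fun i : 'I_2 => if i == ord0 then x else y) g
  by apply/Hg; exact: dvd_refl.
have [x' Hx] : divides g x.
  by apply/Hg; exists (fun i : 'I_2 => if i == ord0 then 1 else 0);
     rewrite sum2 /= mul1r mul0r addr0.
have [y' Hy] : divides g y.
  by apply/Hg; exists (fun i : 'I_2 => if i == ord0 then 0 else 1);
     rewrite sum2 /= mul1r mul0r add0r.
exists g, (c ord0), (c o1), x', y'; split => //.
by rewrite Hc sum2.
Qed.

End Alg.


Section K.
Variable R : idomainType.
Hypothesis hB : bezout_domain R.
Definition cond2 := forall x y z : R, x != 0 -> y != 0 -> z != 0 ->
      exists lam a b : R,
        divides (x + lam * y) (y * (1 - a * z) * (1 - b * (1 - z))).
Hypothesis H2 : cond2.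

Lemma K_of_2 (a b c : R) : (exists e1 e2 e3, e1 * a + e2 * b + e3 * c = 1) ->
  exists p q, cop p c /\ cop p q /\ cop (p * b + q * c) a.
Proof.
move=> [e1 [e2 [e3 He]]].
have caseBC : (exists s t, s * b + t * c = 1) ->
    exists p q, cop p c /\ cop p q /\ cop (p * b + q * c) a.
  move=> [s [t Hst]]; exists s, t; split; last split.
  - by exists b, t; rewrite mulrC.
  - by exists b, c; rewrite mulrC (mulrC c).
  - by rewrite Hst; apply: cop_1.
have caseAU : (exists k, k * a = 1) ->
    exists p q, cop p c /\ cop p q /\ cop (p * b + q * c) a.
  move=> [k Hk]; exists 1, 0; split; last split; try exact: cop_1.
  exact: cop_unit Hk.
have [bz|b0n] := eqVneq b 0.
  rewrite bz in He *; exists 1, 1; split; last split; try exact: cop_1.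
  by rewrite mulr0 add0r mul1r; exists e3, e1; rewrite -He mulr0 addr0 addrC.
have [cz|c0n] := eqVneq c 0.
  rewrite cz in He *; exists 1, 0; split; last split; try exact: cop_1.
  by rewrite mulr0 addr0 mul1r; exists e2, e1; rewrite -He mulr0 addr0 addrC.
have [a0|a0n] := eqVneq a 0.
  by apply: caseBC; exists e2, e3; rewrite -He a0 mulr0 add0r.
have [d [sg [ta [b0 [c0 [Hd [Hb Hc]]]]]]] := bez2 hB b c.
have dn : d != 0 by apply: contraNneq b0n => d0; rewrite Hb d0 mulr0.
have b0n' : b0 != 0 by apply: contraNneq b0n => e; rewrite Hb e mul0r.
have c0n' : c0 != 0 by apply: contraNneq c0n => e; rewrite Hc e mul0r.
have Hbc0 : sg * b0 + ta * c0 = 1.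
  by apply: (cancel_l dn); rewrite mulr1 [in RHS]Hd Hb Hc; ring.
set d0 := e2 * b0 + e3 * c0.
have Had : e1 * a + d0 * d = 1 by rewrite -He Hb Hc /d0; ring.
have [e10|e1n] := eqVneq e1 0.
  apply: caseBC; exists (d0 * sg), (d0 * ta).
  by rewrite -Had e10 mul0r add0r Hd; ring.
set z := a * e1.
have zn : z != 0 by rewrite mulf_neq0.
have [lam [al [be [k Hk]]]] := H2 b0n' c0n' zn.
set t0 := b0 + lam * c0.
set U := 1 - al * z.
set V := 1 - be * (1 - z).
have Ct0 : cop t0 c0 by exists sg, (ta - sg * lam); rewrite -Hbc0 /t0; ring.
have DUV : divides t0 (U * V).
  apply: (gauss Ct0); exists k; rewrite -Hk /U /V; ring.
have [s [ph [ps [r [U1 [Hs [Ht HU]]]]]]] := bez2 hB t0 U.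
have [s0|sn] := eqVneq s 0.
  apply: caseAU; exists (al * e1).
  have : U = 0 by rewrite HU s0 mulr0.
  by rewrite /U /z => /eqP; rewrite subr_eq0 => /eqP ->; ring.
have Hr1 : ph * r + ps * U1 = 1.
  by apply: (cancel_l sn); rewrite mulr1 [in RHS]Hs Ht HU; ring.
have DrV : divides r V.
  apply: (gauss (y := U1)); first by exists ph, ps.
  move: DUV => [k' Hk']; exists k'.
  apply: (cancel_l sn); move: Hk'; rewrite HU Ht => Hk'.
  by transitivity (U1 * s * V); [ring | rewrite Hk'; ring].
have Hzd : 1 - z = d0 * d by rewrite -Had /z; ring.
have Crd : cop r d.
  move: DrV => [v Hv]; exists v, (be * d0).
  by rewrite -Hv /V Hzd; ring.
have Crc0 : cop r c0.
  by apply: (cop_dvdl _ Ct0); exists s; rewrite Ht mulrC.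
have Crc : cop r c by rewrite Hc; apply: cop_mulr.
have [eps [k2 Hek]] := Crc.
have Csa : cop s a by exists U1, (al * e1); rewrite -HU /U /z; ring.
have Cda : cop d a by exists d0, e1; rewrite -Had addrC.
have Cdsa : cop (d * s) a.
  by apply/cop_sym; apply: cop_mulr; apply/cop_sym.
set mu := eps * lam + s * k2 * d.
have Hb0 : b0 = r * s - lam * c0 by rewrite -Ht /t0; ring.
have Heq : eps * b + mu * c = d * s.
  rewrite -[d * s]mulr1 -Hek Hb Hc Hb0 /mu; ring.
have [g [ph2 [ps2 [p [q [Hg [He2 Hmu]]]]]]] := bez2 hB eps mu.
have [g0|gn] := eqVneq g 0.
  apply: caseBC; exists 0, k2; rewrite -Hek.
  by rewrite He2 g0 mulr0 !mul0r.
exists p, q; split; last split.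
- apply: (cop_dvdl (x := eps)); first by exists g; rewrite He2 mulrC.
  by exists r, k2; rewrite mulrC.
- exists ph2, ps2; apply: (cancel_l gn); rewrite mulr1 [in RHS]Hg He2 Hmu; ring.
- apply: (cop_dvdl _ Cdsa); exists g; rewrite -Heq He2 Hmu; ring.
Qed.

End K.


Lemma mul2E (R : comRingType) (A B : 'M[R]_2) i j :
  (A *m B) i j = A i ord0 * B ord0 j + A i o1 * B o1 j.
Proof. by rewrite mxE sum2. Qed.

Lemma diag2E (R : comRingType) (A X B : 'M[R]_2) i j :
  X ord0 o1 = 0 -> X o1 ord0 = 0 ->
  (A *m X *m B) i j = A i ord0 * X ord0 ord0 * B ord0 j + A i o1 * X o1 o1 * B o1 j.
Proof. by move=> h1 h2; rewrite mul2E !mul2E h1 h2; ring. Qed.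

Section EDR2.
Variable R : idomainType.
Hypothesis hB : bezout_domain R.
Hypothesis hE : elementary_divisor_ring R.

Lemma EDR_cond2 : cond2 R.
Proof.
move=> x y z xn yn zn.
have [g [u [v [x' [y' [Hg [Hx Hy]]]]]]] := bez2 hB x y.
have gn : g != 0 by apply: contraNneq xn => e; rewrite Hx e mulr0.
have Huv : u * x' + v * y' = 1.
  by apply: (cancel_l gn); rewrite mulr1 [in RHS]Hg Hx Hy; ring.
set c := y' * (1 - z).
pose M : 'M[R]_2 := \matrix_(i, j) if i == ord0 then (if j == ord0 then z else x')
                                   else (if j == ord0 then 0 else c).
have [P [Q [hP [hQ hD]]]] := hE M.
set D := P *m M *m Q in hD.
have D01 : D ord0 o1 = 0 by apply: hD.
have D10 : D o1 ord0 = 0 by apply: hD.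
set e := D ord0 ord0; set f := D o1 o1.
have HM : M = invmx P *m D *m invmx Q.
  by rewrite /D !mulmxA mulVmx // mul1mx -mulmxA mulmxV // mulmx1.
have HMe : forall i j, M i j = invmx P i ord0 * e * invmx Q ord0 j
                             + invmx P i o1 * f * invmx Q o1 j.
  by move=> i j; rewrite HM diag2E.
have Cef : cop e f.
  set Pi := invmx P; set Qi := invmx Q.
  exists (Pi ord0 ord0 * Qi ord0 ord0 + u * (1 - z) * Pi ord0 ord0 * Qi ord0 o1
          + v * Pi o1 ord0 * Qi ord0 o1),
         (Pi ord0 o1 * Qi o1 ord0 + u * (1 - z) * Pi ord0 o1 * Qi o1 o1
          + v * Pi o1 o1 * Qi o1 o1).
  have H1 : M ord0 ord0 + u * (1 - z) * M ord0 o1 + v * M o1 o1 = 1.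
    rewrite !mxE /= /c; transitivity (z + (1 - z) * (u * x' + v * y')); [ring | by rewrite Huv; ring].
  rewrite -[RHS]H1 !HMe -/Pi -/Qi; ring.
have [sg [ta Hst]] := Cef.
set p0 := P ord0 ord0 + P o1 ord0; set p1 := P ord0 o1 + P o1 o1.
set w0 := Q ord0 ord0 * sg + Q ord0 o1 * ta.
set w1 := Q o1 ord0 * sg + Q o1 o1 * ta.
have Hkey : p0 * z * w0 + (p0 * x' + p1 * c) * w1 = 1.
  rewrite -Hst.
  have -> : sg * e + ta * f = (D ord0 ord0 + D o1 ord0) * sg + (D ord0 o1 + D o1 o1) * ta.
    by rewrite D01 D10 /e /f; ring.
  rewrite /D !mul2E !mxE /=; rewrite /p0 /p1 /w0 /w1; ring.
set A := z * w0 + x' * w1; set B := p1 * w1.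
have HAB : A * p0 + B * c = 1 by rewrite -Hkey /A /B; ring.
set s := p0 * x' + p1 * c.
exists ((1 - z) * (A * p1 - B * x')), (p0 * w0), (B * y').
have E1 : 1 - p0 * w0 * z = w1 * s by rewrite -Hkey /s; ring.
have E2 : 1 - B * y' * (1 - z) = A * p0.
  by rewrite -[X in X - B * _ * _]HAB /c; ring.
have E3 : x' + (1 - z) * (A * p1 - B * x') * y' = A * s.
  have : A * s = (A * p0 + B * c) * x' + c * (A * p1 - B * x') by rewrite /s; ring.
  by rewrite HAB mul1r /c => ->; ring.
exists (w1 * p0 * y').
rewrite E1 E2 Hx Hy.
transitivity (w1 * p0 * y' * (g * (x' + (1 - z) * (A * p1 - B * x') * y'))).
  by rewrite E3; ring.
ring.
Qed.

End EDR2.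


Definition mx2 (R : Type) (a b c d : R) : 'M[R]_2 :=
  \matrix_(i, j) if i == ord0 then (if j == ord0 then a else b)
                 else (if j == ord0 then c else d).

Lemma ord2P (i : 'I_2) : i = ord0 \/ i = o1.
Proof.
case: i => [[|[|n]] Hi]; [left|right|by []]; exact: val_inj.
Qed.

Lemma mx2E00 (R : Type) (a b c d : R) : mx2 a b c d ord0 ord0 = a. Proof. by rewrite mxE. Qed.
Lemma mx2E01 (R : Type) (a b c d : R) : mx2 a b c d ord0 o1 = b. Proof. by rewrite mxE. Qed.
Lemma mx2E10 (R : Type) (a b c d : R) : mx2 a b c d o1 ord0 = c. Proof. by rewrite mxE. Qed.
Lemma mx2E11 (R : Type) (a b c d : R) : mx2 a b c d o1 o1 = d. Proof. by rewrite mxE. Qed.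
Definition mx2E := (mx2E00, mx2E01, mx2E10, mx2E11).

Section Mx.
Variable R : idomainType.

Lemma mx2_ext (M : 'M[R]_2) :
  M = mx2 (M ord0 ord0) (M ord0 o1) (M o1 ord0) (M o1 o1).
Proof.
apply/matrixP => i j; rewrite mxE.
by case: (ord2P i) => ->; case: (ord2P j) => ->.
Qed.

Lemma mul_mx2 (a b c d a' b' c' d' : R) :
  mx2 a b c d *m mx2 a' b' c' d' =
  mx2 (a * a' + b * c') (a * b' + b * d') (c * a' + d * c') (c * b' + d * d').
Proof.
apply/matrixP => i j; rewrite mul2E !mxE.
by case: (ord2P i) => ->; case: (ord2P j) => ->.
Qed.

Lemma unit2 (a b c d : R) : a * d - b * c = 1 -> mx2 a b c d \in unitmx.
Proof.
move=> H; have [] // := @mulmx1_unit _ _ (mx2 a b c d) (mx2 d (-b) (-c) a).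
rewrite mul_mx2; apply/matrixP => i j; rewrite !mxE.
by case: (ord2P i) => ->; case: (ord2P j) => -> /=; rewrite ?mulr1n ?mulr0n; first [ring | rewrite -H; ring].
Qed.

Lemma dvdmxl m n p d (A : 'M[R]_(m, n)) (B : 'M[R]_(n, p)) :
  (forall i j, divides d (A i j)) -> forall i j, divides d ((A *m B) i j).
Proof.
move=> H i j; rewrite mxE; apply: dvd_sum => k _; apply: dvd_mulr; exact: H.
Qed.

Lemma dvdmxr m n p d (A : 'M[R]_(m, n)) (B : 'M[R]_(p, m)) :
  (forall i j, divides d (A i j)) -> forall i j, divides d ((B *m A) i j).
Proof.
move=> H i j; rewrite mxE; apply: dvd_sum => k _; apply: dvd_mull; exact: H.
Qed.

Lemma dvd_equiv m n d (A : 'M[R]_(m, n)) P Q :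
  P \in unitmx -> Q \in unitmx ->
  (forall i j, divides d ((P *m A *m Q) i j)) -> forall i j, divides d (A i j).
Proof.
move=> hP hQ H.
have -> : A = invmx P *m (P *m A *m Q) *m invmx Q.
  by rewrite !mulmxA mulVmx // mul1mx -mulmxA mulmxV // mulmx1.
by apply: dvdmxl; apply: dvdmxr.
Qed.

Hypothesis hB : bezout_domain R.
Hypothesis H2 : cond2 R.

Definition goodcorner m n (A : 'M[R]_(m.+1, n.+1)) :=
  exists P Q, P \in unitmx /\ Q \in unitmx /\
    forall i j, divides ((P *m A *m Q) ord0 ord0) (A i j).

Lemma key_tri (a b c : R) : goodcorner (mx2 a b 0 c).
Proof.
have [g1 [s1 [t1 [a1 [b1 [Hg1 [Ha Hb]]]]]]] := bez2 hB a b.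
have [h [s2 [t2 [g2 [c' [Hh [Hg1' Hc]]]]]]] := bez2 hB g1 c.
have [h0|hn] := eqVneq h 0.
  exists 1, 1; split; first exact: unitmx1; split; first exact: unitmx1.
  rewrite mul1mx mulmx1.
  have a0 : a = 0 by rewrite Ha Hg1' h0 !mulr0.
  have b0 : b = 0 by rewrite Hb Hg1' h0 !mulr0.
  have c0 : c = 0 by rewrite Hc h0 !mulr0.
  by move=> i j; rewrite a0 b0 c0 !mxE !if_same; apply: dvd0.
set a' := a1 * g2; set b' := b1 * g2.
have Hcomb : exists e1 e2 e3, e1 * a' + e2 * b' + e3 * c' = 1.
  exists (s2 * s1), (s2 * t1), t2; apply: (cancel_l hn).
  rewrite mulr1 [in RHS]Hh Hg1 Ha Hb Hc Hg1' /a' /b'; ring.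
have [p [q [Cpc [Cpq Cwa]]]] := K_of_2 hB H2 Hcomb.
set w := p * b' + q * c'.
have Cpw : cop p w.
  have [al [be Hab]] := cop_mulr Cpq Cpc.
  by exists (al - be * b'), be; rewrite -Hab /w; ring.
have [al [be Hab]] : cop (p * a') w.
  apply/cop_sym; apply: cop_mulr; [exact/cop_sym | exact: Cwa].
have [p2 [q2 Hpq]] := Cpq.
exists (mx2 p q (- q2) p2), (mx2 al (- w) be (p * a')); split.
  by apply: unit2; rewrite -Hpq; ring.
split; first by apply: unit2; rewrite -Hab; ring.
have -> : (mx2 p q (- q2) p2 *m mx2 a b 0 c *m mx2 al (- w) be (p * a')) ord0 ord0 = h.
  rewrite !mul_mx2 mxE /= -[RHS]mulr1 -Hab Ha Hb Hc Hg1' /w /a' /b'; ring.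
move=> i j; rewrite mxE.
case: (ord2P i) => -> /=; case: (ord2P j) => -> /=.
- by rewrite Ha Hg1'; exists (a1 * g2); ring.
- by rewrite Hb Hg1'; exists (b1 * g2); ring.
- exact: dvd0.
- by rewrite Hc; exists c'.
Qed.

Lemma key22 (M : 'M[R]_2) : goodcorner M.
Proof.
have [g [s [t [x1 [x2 [Hg [H1 H2']]]]]]] := bez2 hB (M ord0 ord0) (M o1 ord0).
have [g0|gn] := eqVneq g 0.
  have -> : M = mx2 (M ord0 ord0) (M ord0 o1) 0 (M o1 o1).
    by rewrite {1}[M]mx2_ext H2' g0 mulr0.
  exact: key_tri.
have Hx : s * x1 + t * x2 = 1.
  by apply: (cancel_l gn); rewrite mulr1 [in RHS]Hg H1 H2'; ring.
set P0 := mx2 s t (- x2) x1.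
have hP0 : P0 \in unitmx by apply: unit2; rewrite -Hx; ring.
have [P [Q [hP [hQ HPQ]]]] := key_tri g (s * M ord0 o1 + t * M o1 o1)
                                       (- x2 * M ord0 o1 + x1 * M o1 o1).
have E : mx2 g (s * M ord0 o1 + t * M o1 o1) 0 (- x2 * M ord0 o1 + x1 * M o1 o1)
         = P0 *m M.
  rewrite [M in RHS]mx2_ext /P0 mul_mx2 Hg H1 H2'; congr mx2; ring.
rewrite E in HPQ.
exists (P *m P0), Q; split; first by rewrite unitmx_mul hP hP0.
split=> //.
have HH : forall i j, divides ((P *m (P0 *m M) *m Q) ord0 ord0) ((P *m (P0 *m M) *m Q) i j).
  by apply: dvdmxl; apply: dvdmxr.
rewrite -!mulmxA in HH *.
move=> i j; apply: (dvd_equiv (P := P *m P0) (Q := Q)).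
- by rewrite unitmx_mul hP hP0.
- exact: hQ.
- by move=> k l; rewrite -!mulmxA; apply: HH.
Qed.

End Mx.


Section Emb.
Variable R : idomainType.

Definition emb n (i j : 'I_n) (T : 'M[R]_2) : 'M[R]_n :=
  \matrix_(k, l) if k == i then (if l == i then T ord0 ord0 else if l == j then T ord0 o1 else 0)
                 else if k == j then (if l == i then T o1 ord0 else if l == j then T o1 o1 else 0)
                 else (k == l)%:R.

Lemma sum_sel n (i j : 'I_n) (f : 'I_n -> R) : i != j ->
  (forall x, x != i -> x != j -> f x = 0) -> \sum_x f x = f i + f j.
Proof.
move=> ij H; rewrite (bigD1 i) //= (bigD1 j) /=; last by rewrite eq_sym.
rewrite big1 ?addr0 // => x /andP [xi xj]; exact: H.
Qed.

Variables (n : nat) (i j : 'I_n).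
Hypothesis ij : i != j.

Lemma embL m (T : 'M[R]_2) (B : 'M[R]_(n, m)) k l :
  (emb i j T *m B) k l =
  if k == i then T ord0 ord0 * B i l + T ord0 o1 * B j l
  else if k == j then T o1 ord0 * B i l + T o1 o1 * B j l else B k l.
Proof.
have ji : j != i by rewrite eq_sym.
rewrite mxE; have [?|ki] := eqVneq k i; first subst k.
  rewrite (sum_sel ij) => [|x xi xj]; first by rewrite !mxE !eqxx (negbTE ji).
  by rewrite mxE eqxx (negbTE xi) (negbTE xj) mul0r.
have [?|kj] := eqVneq k j; first subst k.
  rewrite (sum_sel ij) => [|x xi xj]; first by rewrite !mxE !eqxx (negbTE ji).
  by rewrite mxE eqxx (negbTE ji) (negbTE xi) (negbTE xj) mul0r.
rewrite (eq_bigr (fun x => (1%:M : 'M[R]_n) k x * B x l)).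
  by rewrite -[in RHS](mul1mx B) mxE.
by move=> x _; rewrite !mxE (negbTE ki) (negbTE kj).
Qed.

Lemma embR m (T : 'M[R]_2) (B : 'M[R]_(m, n)) k l :
  (B *m emb i j T) k l =
  if l == i then B k i * T ord0 ord0 + B k j * T o1 ord0
  else if l == j then B k i * T ord0 o1 + B k j * T o1 o1 else B k l.
Proof.
have ji : j != i by rewrite eq_sym.
rewrite mxE; have [?|li] := eqVneq l i; first subst l.
  rewrite (sum_sel ij) => [|x xi xj]; first by rewrite !mxE !eqxx (negbTE ji).
  by rewrite mxE (negbTE xi) (negbTE xj) mulr0.
have [?|lj] := eqVneq l j; first subst l.
  rewrite (sum_sel ij) => [|x xi xj]; first by rewrite !mxE !eqxx (negbTE ji).
  by rewrite mxE (negbTE xi) (negbTE xj) mulr0.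
rewrite (eq_bigr (fun x => B k x * (1%:M : 'M[R]_n) x l)).
  by rewrite -[in RHS](mulmx1 B) mxE.
move=> x _; rewrite !mxE (negbTE li) (negbTE lj).
case: (eqVneq x i) => [->|xi]; first by rewrite eq_sym (negbTE li).
case: (eqVneq x j) => [->|xj]; first by rewrite eq_sym (negbTE lj).
by [].
Qed.

Lemma emb_mul (T1 T2 : 'M[R]_2) : emb i j T1 *m emb i j T2 = emb i j (T1 *m T2).
Proof.
have ji : j != i by rewrite eq_sym.
apply/matrixP => k l; rewrite embL [RHS]mxE !mul2E.
have [?|ki] := eqVneq k i; first subst k.
  rewrite !mxE !eqxx (negbTE ji).
  have [?|li] := eqVneq l i; first by subst l; rewrite ?eqxx ?mulr0 ?addr0.
  have [?|lj] := eqVneq l j; first by subst l; rewrite ?eqxx ?mulr0 ?add0r.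
  by rewrite !mulr0 !addr0.
have [?|kj] := eqVneq k j; first subst k.
  rewrite !mxE !eqxx (negbTE ji).
  have [?|li] := eqVneq l i; first by subst l; rewrite ?eqxx ?mulr0 ?addr0.
  have [?|lj] := eqVneq l j; first by subst l; rewrite ?eqxx ?mulr0 ?add0r.
  by rewrite !mulr0 !addr0.
by rewrite !mxE (negbTE ki) (negbTE kj).
Qed.

Lemma emb1 : emb i j 1%:M = 1%:M.
Proof.
have ji : j != i by rewrite eq_sym.
apply/matrixP => k l; rewrite !mxE.
have [?|ki] := eqVneq k i; first subst k.
  have [?|li] := eqVneq l i; first by subst l; rewrite ?eqxx.
  have [?|lj] := eqVneq l j; first by subst l; rewrite ?(negbTE ij).
  by rewrite ?mulr0n.
have [?|kj] := eqVneq k j; first subst k.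
  have [?|li] := eqVneq l i; first by subst l; rewrite ?(negbTE ji).
  have [?|lj] := eqVneq l j; first by subst l; rewrite ?eqxx.
  by rewrite ?mulr0n ?eq_sym ?(negbTE lj) ?mulr0n.
by [].
Qed.

Lemma emb_unit (T : 'M[R]_2) : T \in unitmx -> emb i j T \in unitmx.
Proof.
move=> hT; have [] // := @mulmx1_unit _ _ (emb i j T) (emb i j (invmx T)).
by rewrite emb_mul mulmxV // emb1.
Qed.

End Emb.

Definition sub2 (R : Type) m n (B : 'M[R]_(m, n)) i0 i1 j0 j1 :=
  mx2 (B i0 j0) (B i0 j1) (B i1 j0) (B i1 j1).

Lemma sub2_emb (R : idomainType) m n (B : 'M[R]_(m, n)) i0 i1 j0 j1 P Q :
  i0 != i1 -> j0 != j1 ->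
  sub2 (emb i0 i1 P *m B *m emb j0 j1 Q) i0 i1 j0 j1 =
  P *m sub2 B i0 i1 j0 j1 *m Q.
Proof.
move=> hi hj.
have hi' : i1 != i0 by rewrite eq_sym.
have hj' : j1 != j0 by rewrite eq_sym.
rewrite /sub2 !embR // !embL // !eqxx (negbTE hi') (negbTE hj').
rewrite [in RHS](mx2_ext P) [in RHS](mx2_ext Q) !mul_mx2; congr mx2; ring.
Qed.


Section Key.
Variable R : idomainType.
Hypothesis hB : bezout_domain R.
Hypothesis H2 : cond2 R.

Definition reach m n (A B : 'M[R]_(m, n)) :=
  exists P Q, P \in unitmx /\ Q \in unitmx /\ B = P *m A *m Q.

Lemma reach_refl m n (A : 'M[R]_(m, n)) : reach A A.
Proof. by exists 1%:M, 1%:M; rewrite mul1mx mulmx1 !unitmx1. Qed.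

Lemma reach_trans m n (A B C : 'M[R]_(m, n)) : reach A B -> reach B C -> reach A C.
Proof.
move=> [P [Q [hP [hQ ->]]]] [P' [Q' [hP' [hQ' ->]]]].
exists (P' *m P), (Q *m Q'); rewrite !unitmx_mul hP hQ hP' hQ'; split=> //; split=> //.
by rewrite !mulmxA.
Qed.

Lemma reachL m n (A : 'M[R]_(m, n)) P : P \in unitmx -> reach A (P *m A).
Proof. by move=> hP; exists P, 1%:M; rewrite mulmx1 unitmx1. Qed.

Lemma reachR m n (A : 'M[R]_(m, n)) Q : Q \in unitmx -> reach A (A *m Q).
Proof. by move=> hQ; exists 1%:M, Q; rewrite mul1mx unitmx1. Qed.

Lemma rowop_bez m N (B : 'M[R]_(m, N)) (i0 i1 : 'I_m) (l : 'I_N) : i0 != i1 ->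
  exists T, T \in unitmx /\
    [/\ divides ((emb i0 i1 T *m B) i0 l) (B i0 l),
        divides ((emb i0 i1 T *m B) i0 l) (B i1 l) &
        (emb i0 i1 T *m B) i1 l = 0].
Proof.
move=> ij.
have ji : i1 != i0 by rewrite eq_sym.
have [g [s [t [x1 [x2 [Hg [H1 H2']]]]]]] := bez2 hB (B i0 l) (B i1 l).
have [g0|gn] := eqVneq g 0.
  exists 1%:M; split; first exact: unitmx1.
  rewrite emb1 // mul1mx H1 H2' g0 !mulr0; by split; try exact: dvd0.
have Hx : s * x1 + t * x2 = 1.
  by apply: (cancel_l gn); rewrite mulr1 [in RHS]Hg H1 H2'; ring.
exists (mx2 s t (- x2) x1); split; first by apply: unit2; rewrite -Hx; ring.
rewrite !embL // eqxx (negbTE ji) eqxx !mx2E -Hg; split.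
- by rewrite H1; exists x1.
- by rewrite H2'; exists x2.
- by rewrite H1 H2'; ring.
Qed.

Lemma colop_bez m N (B : 'M[R]_(m, N)) (k : 'I_m) (j0 j1 : 'I_N) : j0 != j1 ->
  exists T, T \in unitmx /\
    [/\ divides ((B *m emb j0 j1 T) k j0) (B k j0),
        divides ((B *m emb j0 j1 T) k j0) (B k j1) &
        (B *m emb j0 j1 T) k j1 = 0].
Proof.
move=> ij.
have ji : j1 != j0 by rewrite eq_sym.
have [g [s [t [x1 [x2 [Hg [H1 H2']]]]]]] := bez2 hB (B k j0) (B k j1).
have [g0|gn] := eqVneq g 0.
  exists 1%:M; split; first exact: unitmx1.
  rewrite emb1 // mulmx1 H1 H2' g0 !mulr0; by split; try exact: dvd0.
have Hx : s * x1 + t * x2 = 1.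
  by apply: (cancel_l gn); rewrite mulr1 [in RHS]Hg H1 H2'; ring.
exists (mx2 s (- x2) t x1); split; first by apply: unit2; rewrite -Hx; ring.
rewrite !embR // eqxx (negbTE ji) eqxx !mx2E.
have -> : B k j0 * s + B k j1 * t = g by rewrite Hg; ring.
split.
- by rewrite H1; exists x1.
- by rewrite H2'; exists x2.
- by rewrite H1 H2'; ring.
Qed.

End Key.


Section Phases.
Variable R : idomainType.
Hypothesis hB : bezout_domain R.
Hypothesis H2 : cond2 R.

Lemma ord_lt1 n (k : 'I_n.+1) : (k < 1)%N -> k = ord0.
Proof. by move=> h; apply: val_inj => /=; lia. Qed.

Lemma phase1 m N (B : 'M[R]_(m.+1, N)) (l : 'I_N) : forall I, (0 < I <= m.+1)%N ->
  exists B', reach B B' /\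
    forall k : 'I_(m.+1), (k < I)%N -> divides (B' ord0 l) (B' k l).
Proof.
elim => [//|I IH] /andP [_ hI].
case: I IH hI => [|I] IH hI.
  exists B; split; first exact: reach_refl.
  by move=> k /ord_lt1 ->; apply: dvd_refl.
have [|B1 [rB1 H1]] := IH _; first by apply/andP; split => //; lia.
set i : 'I_(m.+1) := inord I.+1.
have iI : (i : nat) = I.+1 by rewrite /i inordK //; lia.
have i0 : (ord0 : 'I_(m.+1)) != i by apply/eqP => /(congr1 val) /=; rewrite iI.
have [T [hT [d1 d2 d3]]] := rowop_bez hB B1 l i0.
exists (emb ord0 i T *m B1); split.
  by apply: (reach_trans rB1); apply: reachL; apply: emb_unit.
move=> k hk.
have [->|k0] := eqVneq k ord0; first exact: dvd_refl.
have [->|ki] := eqVneq k i; first by rewrite d3; apply: dvd0.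
have hk' : (k < I.+1)%N.
  have : (k : nat) != i by apply/eqP => /val_inj; apply/eqP.
  by rewrite iI; lia.
rewrite [X in divides _ X]embL // (negbTE k0) (negbTE ki).
exact: (dvd_trans d1 (H1 k hk')).
Qed.

Lemma colabsorb m n (B : 'M[R]_(m.+1, n.+1)) (j : 'I_(n.+1)) : ord0 != j ->
  forall I, (0 < I <= m.+1)%N ->
  exists P T, P \in unitmx /\ T \in unitmx /\
    let B' := P *m B *m emb ord0 j T in
    (forall k : 'I_(m.+1), (k < I)%N ->
       divides (B' ord0 ord0) (B' k ord0) /\ divides (B' ord0 ord0) (B' k j)) /\
    divides (B' ord0 ord0) (B ord0 ord0).
Proof.
move=> j0; elim => [//|I IH] /andP [_ hI].
case: I IH hI => [|I] IH hI.
  have [T [hT [d1 d2 d3]]] := colop_bez hB B ord0 j0.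
  exists 1%:M, T; split; first exact: unitmx1; split=> //=.
  rewrite mul1mx; split=> // k /ord_lt1 ->; split; first exact: dvd_refl.
  by rewrite d3; apply: dvd0.
have [|P [T [hP [hT /= [H1 H1']]]]] := IH _; first by apply/andP; split => //; lia.
set B1 := P *m B *m emb ord0 j T in H1 H1'.
set i : 'I_(m.+1) := inord I.+1.
have iI : (i : nat) = I.+1 by rewrite /i inordK //; lia.
have i0 : (ord0 : 'I_(m.+1)) != i by apply/eqP => /(congr1 val) /=; rewrite iI.
have [P2 [Q2 [hP2 [hQ2 HS]]]] := key22 hB H2 (sub2 B1 ord0 i ord0 j).
exists (emb ord0 i P2 *m P), (T *m Q2); split.
  by rewrite unitmx_mul hP emb_unit.
split; first by rewrite unitmx_mul hT hQ2.
rewrite /=.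
have EB : emb ord0 i P2 *m P *m B *m emb ord0 j (T *m Q2)
          = emb ord0 i P2 *m B1 *m emb ord0 j Q2.
  by rewrite -emb_mul // /B1 !mulmxA.
rewrite EB; clearbody B1.
set B2 := emb ord0 i P2 *m B1 *m emb ord0 j Q2.
have ES : sub2 B2 ord0 i ord0 j = P2 *m sub2 B1 ord0 i ord0 j *m Q2.
  exact: sub2_emb.
set S := sub2 B1 ord0 i ord0 j in HS ES.
have HS' : forall a b, divides ((P2 *m S *m Q2) ord0 ord0) ((P2 *m S *m Q2) a b).
  by apply: dvdmxl; apply: dvdmxr.
have c00 : B2 ord0 ord0 = (P2 *m S *m Q2) ord0 ord0 by rewrite -ES mx2E.
have c0j : B2 ord0 j = (P2 *m S *m Q2) ord0 o1 by rewrite -ES mx2E.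
have ci0 : B2 i ord0 = (P2 *m S *m Q2) o1 ord0 by rewrite -ES mx2E.
have cij : B2 i j = (P2 *m S *m Q2) o1 o1 by rewrite -ES mx2E.
have dB1 : divides (B2 ord0 ord0) (B1 ord0 ord0).
  by rewrite c00; have := HS ord0 ord0; rewrite /S mx2E.
split; last exact: dvd_trans dB1 H1'.
move=> k hk.
have [->|k0] := eqVneq k ord0.
  by rewrite c0j c00; split; [apply: dvd_refl | apply: HS'].
have [->|ki] := eqVneq k i.
  by rewrite ci0 cij c00; split; apply: HS'.
have hk' : (k < I.+1)%N.
  have : (k : nat) != i by apply/eqP => /val_inj; apply/eqP.
  by rewrite iI; lia.
have [hk0 hkj] := H1 k hk'.
have ji : j != ord0 by rewrite eq_sym.
have E1 : B2 k ord0 = B1 k ord0 * Q2 ord0 ord0 + B1 k j * Q2 o1 ord0.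
  by rewrite /B2 -mulmxA embL // (negbTE k0) (negbTE ki) embR // eqxx.
have E2 : B2 k j = B1 k ord0 * Q2 ord0 o1 + B1 k j * Q2 o1 o1.
  by rewrite /B2 -mulmxA embL // (negbTE k0) (negbTE ki) embR // (negbTE ji) eqxx.
rewrite E1 E2.
split; apply: dvd_add; apply: dvd_mulr; exact: dvd_trans dB1 _.
Qed.

Lemma phase2 m n (A : 'M[R]_(m.+1, n.+1)) : forall J, (0 < J <= n.+1)%N ->
  exists B, reach A B /\ forall k (l : 'I_(n.+1)), (l < J)%N -> divides (B ord0 ord0) (B k l).
Proof.
elim => [//|J IH] /andP [_ hJ].
case: J IH hJ => [|J] IH hJ.
  have [B [rB HB]] := phase1 A ord0 (ltac:(by rewrite leqnn) : (0 < m.+1 <= m.+1)%N).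
  by exists B; split => // k l /ord_lt1 ->; apply: HB.
have [|B1 [rB1 H1]] := IH _; first by apply/andP; split => //; lia.
set j : 'I_(n.+1) := inord J.+1.
have jJ : (j : nat) = J.+1 by rewrite /j inordK //; lia.
have j0 : (ord0 : 'I_(n.+1)) != j by apply/eqP => /(congr1 val) /=; rewrite jJ.
have [P [T [hP [hT /= [HC HC']]]]] := colabsorb B1 j0 (ltac:(by rewrite leqnn) : (0 < m.+1 <= m.+1)%N).
exists (P *m B1 *m emb ord0 j T); split.
  apply: (reach_trans rB1); exists P, (emb ord0 j T); split=> //.
  by split=> //; apply: emb_unit.
move=> k l hl.
have [->|l0] := eqVneq l ord0; first by have [] := HC k (ltn_ord k).
have [->|lj] := eqVneq l j; first by have [] := HC k (ltn_ord k).
have hl' : (l < J.+1)%N.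
  have : (l : nat) != j by apply/eqP => /val_inj; apply/eqP.
  by rewrite jJ; lia.
rewrite [X in divides _ X]embR // (negbTE l0) (negbTE lj) [X in divides _ X]mxE.
apply: dvd_sum => x _; apply: dvd_mull.
exact: dvd_trans HC' (H1 x l hl').
Qed.

Lemma keyall m n (A : 'M[R]_(m.+1, n.+1)) :
  exists B, reach A B /\ forall k l, divides (B ord0 ord0) (B k l).
Proof.
have [B [rB HB]] := phase2 A (ltac:(by rewrite leqnn) : (0 < n.+1 <= n.+1)%N).
by exists B; split => // k l; apply: HB.
Qed.

End Phases.


Section Diag.
Variable R : idomainType.
Hypothesis hB : bezout_domain R.
Hypothesis H2 : cond2 R.

Lemma diag_block m n (d : 'M[R]_1) (Y : 'M[R]_(m, n)) :
  is_diagonal Y -> is_diagonal (block_mx d 0 0 Y : 'M_(1 + m, 1 + n)).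
Proof.
move=> hY i j hij.
rewrite -(splitK i) -(splitK j) in hij *.
case: (split i) hij => [i'|i']; case: (split j) => [j'|j'] /= hij.
- by exfalso; apply: hij; rewrite !ord1.
- by rewrite block_mxEur mxE.
- by rewrite block_mxEdl mxE.
- rewrite block_mxEdr; apply: hY => e; apply: hij; by rewrite /= e.
Qed.

Lemma fin_quot m (f : 'I_m -> R) d : (forall i, divides d (f i)) ->
  exists g : 'I_m -> R, forall i, f i = g i * d.
Proof.
move=> H.
have H' : forall i, exists c, f i == c * d.
  by move=> i; have [c hc] := H i; exists c; apply/eqP.
by exists (fun i => xchoose (H' i)) => i; apply/eqP; exact: (xchooseP (H' i)).
Qed.

Theorem diag_all m : forall n (A : 'M[R]_(m, n)),
  exists P Q, P \in unitmx /\ Q \in unitmx /\ is_diagonal (P *m A *m Q).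
Proof.
elim: m => [|m IH] n A.
  by exists 1%:M, 1%:M; rewrite !unitmx1; split=> //; split=> // [[]].
case: n A => [|n] A.
  by exists 1%:M, 1%:M; rewrite !unitmx1; split=> //; split=> // i [].
have [B [[P0 [Q0 [hP0 [hQ0 EB]]]] HB]] := keyall hB H2 A.
set d := B ord0 ord0 in HB.
have [d0|dn] := eqVneq d 0.
  exists P0, Q0; split=> //; split=> //; rewrite -EB => i j _.
  by have [c ->] := HB i j; rewrite d0 mulr0.
pose Bb : 'M[R]_(1 + m, 1 + n) := B.
have Hc : forall i : 'I_m, divides d (dlsubmx Bb i ord0).
  by move=> i; rewrite !mxE; apply: HB.
have Hu : forall j : 'I_n, divides d (ursubmx Bb ord0 j).
  by move=> j; rewrite !mxE; apply: HB.
have [fc Hfc] := fin_quot Hc.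
have [fu Hfu] := fin_quot Hu.
pose C' : 'M[R]_(m, 1) := \matrix_(i, j) fc i.
pose U' : 'M[R]_(1, n) := \matrix_(i, j) fu j.
have Eul : ulsubmx Bb = d%:M.
  apply/matrixP => i j; rewrite !ord1 !mxE /= mulr1n /d /Bb.
  by congr (B _ _); apply: val_inj.
have EC : C' *m ulsubmx Bb = dlsubmx Bb.
  rewrite Eul mul_mx_scalar; apply/matrixP => i j.
  by rewrite !ord1 Hfc !mxE mulrC.
have EU : ulsubmx Bb *m U' = ursubmx Bb.
  rewrite Eul mul_scalar_mx; apply/matrixP => i j.
  by rewrite !ord1 Hfu !mxE mulrC.
pose L : 'M[R]_(1 + m) := block_mx 1%:M 0 (- C') 1%:M.
pose Uu : 'M[R]_(1 + n) := block_mx 1%:M (- U') 0 1%:M.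
pose D' := drsubmx Bb - C' *m ursubmx Bb.
have EL : L *m Bb *m Uu = block_mx (ulsubmx Bb) 0 0 D'.
  rewrite -[Bb in LHS]submxK /L /Uu !mulmx_block.
  rewrite !mul1mx !mul0mx !mulmx1 !mulmx0 !addr0.
  rewrite mulNmx EC addNr mul0mx add0r mulmxN EU addNr mulNmx.
  by rewrite /D' addrC.
have [P' [Q' [hP' [hQ' HD]]]] := IH _ D'.
have hL : L \in unitmx by rewrite unitmxE det_lblock !det1 mulr1 unitr1.
have hU : Uu \in unitmx by rewrite unitmxE det_ublock !det1 mulr1 unitr1.
have hbP : (block_mx 1%:M 0 0 P' : 'M[R]_(1 + m)) \in unitmx.
  by rewrite unitmxE det_ublock det1 mul1r -unitmxE.
have hbQ : (block_mx 1%:M 0 0 Q' : 'M[R]_(1 + n)) \in unitmx.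
  by rewrite unitmxE det_ublock det1 mul1r -unitmxE.
exists (block_mx 1%:M 0 0 P' *m L *m P0), (Q0 *m Uu *m block_mx 1%:M 0 0 Q').
split; first by rewrite !unitmx_mul hbP hL hP0.
split; first by rewrite !unitmx_mul hbQ hU hQ0.
have -> : block_mx 1%:M 0 0 P' *m L *m P0 *m A *m (Q0 *m Uu *m block_mx 1%:M 0 0 Q')
        = block_mx 1%:M 0 0 P' *m (L *m Bb *m Uu) *m block_mx 1%:M 0 0 Q'.
  by rewrite /Bb EB !mulmxA.
rewrite EL !mulmx_block !mul1mx !mul0mx !mulmx0 !mulmx1 !addr0 !add0r.
rewrite ?mul0mx; exact: diag_block.
Qed.

End Diag.


Unset Implicit Arguments.

Theorem proposition2p10 (R : idomainType) :
  bezout_domain R ->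
  (elementary_divisor_ring R <->
   (forall x y z : R, x != 0 -> y != 0 -> z != 0 ->
      exists lam a b : R,
        divides (x + lam * y) (y * (1 - a * z) * (1 - b * (1 - z))))).
Proof.
move=> hB; split.
- by move=> hE; exact: (EDR_cond2 hB hE).
- by move=> H2 m n A; exact: (diag_all hB H2 A).
Qed.
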